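(* Fix $Y$, $q>0$, $\delta>0$, $\rho\in\mathbb R$, and let $(a^*,b^* )=(a^*(\beta),b^*(\beta))$ be the selected pair as a function of $\beta\in(0,1)$. Then: 1. If $q\rho/\delta<1$, then $b^*(\beta)>0$ for all sufficiently small $\beta$, and $b^*(\beta)\to\infty$ as $\beta\downarrow0$. 2. If $q\rho/\delta>1$, then $a^*(\beta)=b^*(\beta)=0$ for all sufficiently small $\beta>0$. 3. If $q\rho/\delta=1$ and $\psi_X'(0+)<0$, then $b^*(\beta)>0$ for all $\beta\in(0,1)$. Moreover, as $\beta\downarrow0$, $b^*(\beta)\to(\overline Z^{(q)})^{-1}(-\psi_X'(0+)/q)$ and $a^*(\beta)\to0$. 4. If $q\rho/\delta=1$ and $\psi_X'(0+)\ge0$, then $a^*(\beta)=b^*(\beta)=0$ for all $\beta\in(0,1)$.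
   Context: Let $Y$ be a spectrally positive Lévy process (not a subordinator) with Laplace exponent $\psi_Y(\theta)=\log\mathbb E[e^{-\theta Y_1}]$ and $\mathbb E[Y_1]=-\psi_Y'(0+)<\infty$. Let $q>0$, $\delta>0$, and $\psi_X(\theta)=\psi_Y(\theta)+\delta\theta$. The scale functions $\mathbb W^{(q)},W^{(q)}$ vanish on $(-\infty,0)$, are continuous and strictly increasing on $[0,\infty)$, and have Laplace transforms $1/(\psi_Y(\theta)-q)$ and $1/(\psi_X(\theta)-q)$. Let $\mathbb Z^{(q)}(x)=1+q\int_0^x\mathbb W^{(q)}$, $Z^{(q)}(x)=1+q\int_0^xW^{(q)}$, $\overline Z^{(q)}(x)=\int_0^xZ^{(q)}$ (strictly increasing from $0$ to $\infty$ on $[0,\infty)$), and $R^{(q)}(z)=\overline Z^{(q)}(z)+\psi_X'(0+)/q$. Let $\tilde r^{(q)}_c(z)=R^{(q)}(z)+\delta\int_c^z\mathbb W^{(q)}(z-y)Z^{(q)}(y)\,dy$. For $\beta\in(0,1)$ and $\rho\in\mathbb R$, let $\Gamma(a,b)=\delta\mathbb Z^{(q)}(a)-q\rho-q\beta\tilde r^{(q)}_{b-a}(b)$ for $0\le a\le b$. Selected pair: if $\Gamma(0,0)=\delta-q\rho-\beta\psi_X'(0+)\le0$, then $a^*=b^*=0$. Otherwise, $b^*>0$ is the unique root of $\min_{0\le a\le b^*}\Gamma(a,b^* )=0$, and $a^*$ is the unique minimizer of $a\mapsto\Gamma(a,b^* )$ on $[0,b^*]$. *)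

(* Defs.v *)
From Stdlib Require Import Reals ClassicalEpsilon.
Open Scope R_scope.

(* Total Riemann integral: RiemannInt when f is Riemann integrable on [a,b]
   (oriented, as in Stdlib), 0 otherwise (never used on non-integrable data). *)
Definition Rint (f : R -> R) (a b : R) : R :=
  match excluded_middle_informative (inhabited (Riemann_integrable f a b)) with
  | left H =>
      RiemannInt (proj1_sig (constructive_indefinite_description
                   (fun _ : Riemann_integrable f a b => True)
                   (match H with inhabits p => ex_intro _ p I end)))
  | right _ => 0
  end.

(* psi is the Laplace exponent psi(t) = log E[exp(-t Y_1)], t >= 0, of a
   spectrally positive Levy process Y with finite mean and psi'(0+) = m,
   which is not a subordinator.  Analytic (Levy-Khintchine / Bernstein)
   characterization. *)
Definition spec_pos_laplace_exponent (psi : R -> R) (m : R) : Prop :=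
  psi 0 = 0 /\
  (exists D : nat -> R -> R,
      (forall t, 0 < t -> D O t = psi t) /\
      (forall n t, 0 < t -> derivable_pt_lim (D n) t (D (S n) t)) /\
      (forall n t, 0 < t -> 0 <= (-1) ^ n * D (S (S n)) t)) /\
  (forall eps, 0 < eps -> exists d, 0 < d /\
      forall t, 0 < t < d -> Rabs (psi t / t - m) < eps) /\
  (exists t, 0 < t /\ 0 < psi t).

Definition is_scale_function (psi : R -> R) (q : R) (W : R -> R) : Prop :=
  (forall x, x < 0 -> W x = 0) /\
  (forall x, 0 <= x -> limit1_in W (fun y => 0 <= y) (W x) x) /\
  (forall x y, 0 <= x -> x < y -> W x < W y) /\
  (exists t0, forall t, t0 < t ->
     forall eps, 0 < eps -> exists M, forall T, M < T ->
       Rabs (Rint (fun x => exp (- t * x) * W x) 0 T - / (psi t - q)) < eps).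

Definition ZZq (q : R) (WW : R -> R) (x : R) : R := 1 + q * Rint WW 0 x.
Definition Zq (q : R) (W : R -> R) (x : R) : R := 1 + q * Rint W 0 x.
Definition Zbarq (q : R) (W : R -> R) (x : R) : R := Rint (Zq q W) 0 x.
(* dX stands for psi_X'(0+) *)
Definition Rq (q : R) (W : R -> R) (dX : R) (z : R) : R := Zbarq q W z + dX / q.
Definition rtilde (q delta : R) (W WW : R -> R) (dX c z : R) : R :=
  Rq q W dX z + delta * Rint (fun y => WW (z - y) * Zq q W y) c z.
Definition Gamma (q delta rho beta : R) (W WW : R -> R) (dX : R) (a b : R) : R :=
  delta * ZZq q WW a - q * rho - q * beta * rtilde q delta W WW dX (b - a) b.

Definition min_is_zero (G : R -> R -> R) (b : R) : Prop :=
  (exists a, 0 <= a <= b /\ G a b = 0) /\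
  (forall a, 0 <= a <= b -> 0 <= G a b).

Definition selected_pair (G : R -> R -> R) (a b : R) : Prop :=
  (G 0 0 <= 0 /\ a = 0 /\ b = 0) \/
  (0 < G 0 0 /\ 0 < b /\ min_is_zero G b /\
   (forall b', 0 <= b' -> min_is_zero G b' -> b' = b) /\
   0 <= a <= b /\ (forall a', 0 <= a' <= b -> G a b <= G a' b) /\
   (forall a', 0 <= a' <= b -> (forall a'', 0 <= a'' <= b -> G a' b <= G a'' b) -> a' = a)).

(* Main.v *)
Require Import Defs.
From Stdlib Require Import Reals.
From Stdlib Require Import Lra ClassicalEpsilon Classical.
From Coquelicot Require Import Coquelicot.
Open Scope R_scope.

Lemma Rint_cases f a b :
  (ex_RInt f a b /\ Rint f a b = RInt f a b) \/ (~ ex_RInt f a b /\ Rint f a b = 0).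
Proof.
  unfold Rint. destruct (excluded_middle_informative _) as [H|H].
  - left. destruct (constructive_indefinite_description _ _) as [pr HH]. simpl. clear HH.
    split. now apply ex_RInt_Reals_1. now rewrite (RInt_Reals f a b pr).
  - right. split; auto. intro E. apply H. constructor. now apply ex_RInt_Reals_0.
Qed.

Lemma Rint_ex f a b : ex_RInt f a b -> Rint f a b = RInt f a b.
Proof. intro E; destruct (Rint_cases f a b) as [[_ H]|[H _]]; tauto. Qed.

Lemma Rint_point f a : Rint f a a = 0.
Proof. rewrite Rint_ex by apply ex_RInt_point. exact (RInt_point a f). Qed.

Lemma Rint_ub f a b K : a <= b -> 0 <= K -> (forall x, a <= x <= b -> f x <= K) ->
  Rint f a b <= K * (b - a).
Proof.
  intros Hab HK Hf. destruct (Rint_cases f a b) as [[E H]|[_ H]]; rewrite H.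
  - apply Rle_trans with (RInt (fun _ => K) a b).
    apply RInt_le; auto. apply ex_RInt_const. intros; apply Hf; lra.
    rewrite RInt_const. unfold scal; simpl; unfold mult; simpl. lra.
  - nra.
Qed.

Lemma Rint_ub_ex f a b K : a <= b -> ex_RInt f a b -> (forall x, a <= x <= b -> f x <= K) ->
  Rint f a b <= K * (b - a).
Proof.
  intros Hab E Hf. rewrite Rint_ex by auto.
  apply Rle_trans with (RInt (fun _ => K) a b).
  apply RInt_le; auto. apply ex_RInt_const. intros; apply Hf; lra.
  rewrite RInt_const. unfold scal; simpl; unfold mult; simpl. lra.
Qed.

Lemma Rint_lb_ex f a b K : a <= b -> ex_RInt f a b -> (forall x, a <= x <= b -> K <= f x) ->
  K * (b - a) <= Rint f a b.
Proof.
  intros Hab E Hf. rewrite Rint_ex by auto.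
  apply Rle_trans with (RInt (fun _ => K) a b).
  rewrite RInt_const. unfold scal; simpl; unfold mult; simpl. lra.
  apply RInt_le; auto. apply ex_RInt_const. intros; apply Hf; lra.
Qed.

Lemma Rint_nonneg f a b : a <= b -> (forall x, a <= x <= b -> 0 <= f x) -> 0 <= Rint f a b.
Proof.
  intros Hab Hf. destruct (Rint_cases f a b) as [[E H]|[_ H]]; rewrite H; [|lra].
  rewrite <- Rint_ex by auto. apply Rle_trans with (0 * (b-a)). lra.
  apply Rint_lb_ex; auto.
Qed.

Lemma Rint_abs f a b K : a <= b -> (forall x, a <= x <= b -> Rabs (f x) <= K) ->
  Rabs (Rint f a b) <= K * (b - a).
Proof.
  intros Hab Hf. destruct (Rint_cases f a b) as [[E H]|[_ H]]; rewrite H.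
  - rewrite Rmult_comm. apply abs_RInt_le_const; auto.
  - rewrite Rabs_R0. destruct (Req_dec a b). subst; lra.
    assert (0 <= K). { apply Rle_trans with (Rabs (f a)). apply Rabs_pos. apply Hf; lra. }
    nra.
Qed.

Lemma Rint_chasles f a b c : ex_RInt f a b -> ex_RInt f b c ->
  Rint f a c = Rint f a b + Rint f b c.
Proof.
  intros E1 E2. rewrite !Rint_ex; auto. rewrite <- RInt_Chasles with (b := b); auto.
  eapply ex_RInt_Chasles; eauto.
Qed.

Lemma Rint_le f g a b : a <= b -> ex_RInt f a b -> ex_RInt g a b ->
  (forall x, a <= x <= b -> f x <= g x) -> Rint f a b <= Rint g a b.
Proof.
  intros. rewrite !Rint_ex; auto. apply RInt_le; auto. intros; apply H2; lra.
Qed.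

Lemma Rint_scal f a b k : ex_RInt f a b -> Rint (fun x => k * f x) a b = k * Rint f a b.
Proof.
  intros E. rewrite !Rint_ex; auto. apply (RInt_scal f a b k E).
  apply (ex_RInt_scal f a b k E).
Qed.

Definition relcont (f : R -> R) := forall x, 0 <= x -> limit1_in f (fun y => 0 <= y) (f x) x.
Definition cl (f : R -> R) x := f (Rmax 0 x).

Lemma Rmax_lip x y : Rabs (Rmax 0 y - Rmax 0 x) <= Rabs (y - x).
Proof. unfold Rmax; destruct (Rle_dec 0 y), (Rle_dec 0 x); unfold Rabs;
  repeat destruct Rcase_abs; lra. Qed.

Lemma cl_cont f : relcont f -> forall x, continuity_pt (cl f) x.
Proof.
  intros Hf x. unfold continuity_pt, continue_in, limit1_in, limit_in; simpl.
  intros eps Heps. destruct (Hf (Rmax 0 x) (Rmax_l _ _) eps Heps) as [alp [Ha H]].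
  exists alp; split; auto. intros y [_ Hy]. unfold R_dist in *. unfold cl.
  apply H. split. apply Rmax_l. unfold R_dist.
  eapply Rle_lt_trans. apply Rmax_lip. auto.
Qed.

Lemma ex_from_cont g h a b : (forall x, continuity_pt g x) -> (forall x, 0 <= x -> g x = h x) ->
  0 <= a -> 0 <= b -> ex_RInt h a b.
Proof.
  intros Hg Hgh Ha Hb. apply ex_RInt_ext with g.
  intros x Hx. apply Hgh. apply Rle_trans with (Rmin a b). unfold Rmin; destruct Rle_dec; lra. lra.
  apply (@ex_RInt_continuous R_CompleteNormedModule). intros z _. apply continuity_pt_filterlim. apply Hg.
Qed.

Lemma cl_eq f x : 0 <= x -> cl f x = f x.
Proof. intros; unfold cl; rewrite Rmax_right; auto. Qed.

Lemma relcont_ex f a b : relcont f -> 0 <= a -> 0 <= b -> ex_RInt f a b.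
Proof. intros Hf; apply ex_from_cont with (cl f). apply cl_cont; auto. apply cl_eq. Qed.


Lemma psi_grow psi m : spec_pos_laplace_exponent psi m ->
  forall T0 K, exists t, T0 < t /\ K < psi t.
Proof.
  intros [_ [[D [HD0 [HDd HD2]]] [Hlim [t1 [Ht1 Hp1]]]]] T0 K.
  destruct (Hlim 1 Rlt_0_1) as [d [Hd Hd']].
  set (A := Rabs m + 1).
  assert (HA : 0 < A) by (unfold A; pose proof (Rabs_pos m); lra).
  set (s := Rmin (d/2) (Rmin (t1/2) (psi t1 / (4*A)))).
  assert (Hs1 : s <= d/2) by apply Rmin_l.
  assert (Hs2 : s <= t1/2) by (eapply Rle_trans; [apply Rmin_r|apply Rmin_l]).
  assert (Hs3 : s <= psi t1/(4*A)) by (eapply Rle_trans; [apply Rmin_r|apply Rmin_r]).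
  assert (Hs0 : 0 < s).
  { unfold s. apply Rmin_pos. lra. apply Rmin_pos. lra. apply Rdiv_lt_0_compat; lra. }
  assert (Hps : psi s < psi t1 / 2).
  { specialize (Hd' s ltac:(lra)).
    assert (E : psi s = (psi s / s) * s) by (field; lra).
    assert (psi s / s < A). { unfold A. revert Hd'. unfold Rabs at 1. destruct Rcase_abs; pose proof (Rle_abs m); lra. }
    assert (s * A <= psi t1 / 4).
    { apply Rmult_le_compat_r with (r := A) in Hs3; [|lra].
      replace (psi t1 / (4 * A) * A) with (psi t1/4) in Hs3 by (field; lra). lra. }
    rewrite E. nra. }
  destruct (MVT_cor2 (D 0%nat) (D 1%nat) s t1 ltac:(lra)) as [c [Hc1 Hc2]].
  { intros c Hc. apply HDd. lra. }
  rewrite !HD0 in Hc1 by lra.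
  assert (HD1c : 0 < D 1%nat c) by nra.
  assert (Hgr : forall t, c < t -> psi c + D 1%nat c * (t - c) <= psi t).
  { intros t Ht. destruct (MVT_cor2 (D 0%nat) (D 1%nat) c t Ht) as [c' [Hc'1 Hc'2]].
    { intros z Hz. apply HDd. lra. }
    rewrite !HD0 in Hc'1 by lra.
    destruct (MVT_cor2 (D 1%nat) (D 2%nat) c c' ltac:(lra)) as [c'' [Hc''1 Hc''2]].
    { intros z Hz. apply HDd. lra. }
    assert (0 <= D 2%nat c'') by (pose proof (HD2 0%nat c'' ltac:(lra)); simpl in *; lra).
    assert (D 1%nat c <= D 1%nat c') by nra. nra. }
  set (t := Rmax T0 c + 1 + (Rabs K + Rabs (psi c) + 1) / D 1%nat c).
  assert (Hq : 0 <= (Rabs K + Rabs (psi c) + 1) / D 1%nat c).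
  { apply Rdiv_le_0_compat; [pose proof (Rabs_pos K); pose proof (Rabs_pos (psi c)); lra| lra]. }
  pose proof (Rmax_l T0 c). pose proof (Rmax_r T0 c).
  exists t; split. unfold t; lra.
  assert (Ht : c < t) by (unfold t; lra).
  specialize (Hgr t Ht).
  assert (HH : D 1%nat c * (t - c) >= Rabs K + Rabs (psi c) + 1).
  { assert (HH1 : t - c >= (Rabs K + Rabs (psi c) + 1) / D 1%nat c) by (unfold t; lra).
    apply Rmult_ge_compat_l with (r := D 1%nat c) in HH1; [|lra].
    replace (D 1%nat c * ((Rabs K + Rabs (psi c) + 1) / D 1%nat c)) with (Rabs K + Rabs (psi c) + 1) in HH1 by (field; lra).
    lra. }
  pose proof (Rle_abs K) as HK1. pose proof (Rle_abs (- psi c)) as HK2. rewrite Rabs_Ropp in HK2. lra.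
Qed.


Lemma ex_expW W t a b : relcont W -> 0 <= a -> 0 <= b ->
  ex_RInt (fun x => exp (- t * x) * W x) a b.
Proof.
  intros HW. apply ex_from_cont with (fun x => exp (- t * x) * cl W x).
  - intros x. apply continuity_pt_mult. reg. apply cl_cont; auto.
  - intros x Hx. rewrite cl_eq; auto.
Qed.

Lemma exp_mono_neg t x y : 0 <= t -> x <= y -> exp (- t * y) <= exp (- t * x).
Proof. intros. assert (- t * y <= - t * x) by nra. destruct (Req_dec (- t * y) (- t * x)) as [E|E].
  rewrite E; lra. apply Rlt_le, exp_increasing. lra. Qed.

Lemma exp_le' a b : a <= b -> exp a <= exp b.
Proof. intros. destruct (Req_dec a b) as [E|E]. rewrite E; lra. apply Rlt_le, exp_increasing; lra. Qed.

Lemma scale_nonneg psi q W : is_scale_function psi q W ->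
  (forall T0, exists t, T0 < t /\ q < psi t) -> 0 <= W 0.
Proof.
  intros [Hneg [Hcont [Hinc [t0 HL]]]] Hgrow.
  assert (HW : relcont W) by exact Hcont.
  apply Rnot_lt_le. intro H0.
  destruct (Hcont 0 (Rle_refl 0) (- W 0 / 2) ltac:(lra)) as [alp [Halp Hal]].
  set (e := alp / 2).
  assert (He : 0 < e) by (unfold e; lra).
  assert (HWe : W e < 0).
  { assert (HH : R_dist (W e) (W 0) < - W 0 / 2).
    { apply Hal. split. simpl; lra. simpl. unfold R_dist. rewrite Rminus_0_r, Rabs_pos_eq; unfold e; lra. }
    unfold R_dist in HH. apply Rabs_def2 in HH. lra. }
  set (c := - W e).
  assert (Hc : 0 < c) by (unfold c; lra).
  assert (Hinc' : forall x y, 0 <= x -> x <= y -> W x <= W y).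
  { intros x y Hx Hxy. destruct (Req_dec x y). subst; lra. apply Rlt_le, Hinc; lra. }
  set (t1 := Rabs t0 + 1).
  assert (Ht1 : t0 < t1) by (unfold t1; pose proof (Rle_abs t0); lra).
  assert (Ht1p : 0 < t1) by (unfold t1; pose proof (Rabs_pos t0); lra).
  set (F := fun T => Rint (fun x => exp (- t1 * x) * W x) 0 T).
  set (L1 := / (psi t1 - q)).
  destruct (HL t1 Ht1 1 Rlt_0_1) as [M1 HM1].
  assert (Htail : exists K, 0 <= K /\ exists T1, e/2 <= T1 /\ forall t, t1 <= t -> forall T, T1 <= T ->
            Rint (fun x => exp (- t * x) * W x) (e/2) T <= exp (- t * e) * K).
  { destruct (classic (forall x, 0 <= x -> W x <= 0)) as [Hall|Hex].
    - exists 0. split. lra. exists (e/2). split. lra. intros t Ht T HT.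
      rewrite Rmult_0_r. apply Rle_trans with (0 * (T - e/2)).
      apply Rint_ub; auto. lra. intros x Hx. pose proof (exp_pos (- t * x)).
      pose proof (Hall x ltac:(lra)). nra. lra.
    - apply not_all_ex_not in Hex. destruct Hex as [x0 Hx0].
      apply imply_to_and in Hx0. destruct Hx0 as [Hx0 HWx0]. apply Rnot_le_lt in HWx0.
      assert (Hx0e : e < x0).
      { apply Rnot_le_lt. intro. pose proof (Hinc' x0 e Hx0 H). lra. }
      set (B := Rabs (W x0) + Rabs (W 0)).
      assert (HB : 0 <= B) by (unfold B; pose proof (Rabs_pos (W x0)); pose proof (Rabs_pos (W 0)); lra).
      set (K := B * x0 + exp (t1 * e) * (Rabs L1 + 1 + Rabs (F x0))).
      exists K. split.
      { unfold K. pose proof (exp_pos (t1 * e)). pose proof (Rabs_pos L1). pose proof (Rabs_pos (F x0)).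
        assert (0 <= B * x0) by nra. nra. }
      exists (Rmax x0 (M1 + 1)). pose proof (Rmax_l x0 (M1+1)). pose proof (Rmax_r x0 (M1+1)).
      split. lra. intros t Ht T HT.
      rewrite (Rint_chasles _ (e/2) x0 T); try (apply ex_expW; auto; lra).
      assert (P1 : Rint (fun x => exp (- t * x) * W x) (e/2) x0 <= (exp (- t * e) * B) * (x0 - e/2)).
      { apply Rint_ub. lra. pose proof (exp_pos (- t * e)); nra.
        intros x Hx. pose proof (exp_pos (- t * x)). pose proof (exp_pos (- t * e)).
        destruct (Rle_dec x e).
        - pose proof (Hinc' x e ltac:(lra) r). nra.
        - pose proof (exp_mono_neg t e x ltac:(lra) ltac:(lra)).
          pose proof (Hinc' 0 x ltac:(lra) ltac:(lra)). pose proof (Hinc' x x0 ltac:(lra) ltac:(lra)).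
          assert (W x <= B). { unfold B. pose proof (Rle_abs (W x0)). pose proof (Rabs_pos (W 0)). lra. }
          nra. }
      assert (P2 : Rint (fun x => exp (- t * x) * W x) x0 T <=
                   exp (- (t - t1) * x0) * Rint (fun x => exp (- t1 * x) * W x) x0 T).
      { rewrite <- Rint_scal by (apply ex_expW; auto; lra).
        apply Rint_le. lra. apply ex_expW; auto; lra.
        apply (ex_RInt_scal (V:=R_NormedModule) _ _ _ (exp (- (t - t1) * x0))). apply ex_expW; auto; lra.
        intros x Hx. pose proof (Hinc' x0 x ltac:(lra) ltac:(lra)).
        replace (exp (- t * x)) with (exp (- (t - t1) * x) * exp (- t1 * x))
          by (rewrite <- exp_plus; f_equal; ring).
        pose proof (exp_mono_neg (t - t1) x0 x ltac:(lra) ltac:(lra)).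
        pose proof (exp_pos (- t1 * x)). pose proof (exp_pos (- (t - t1) * x)).
        assert (0 <= exp (- t1 * x) * W x) by nra. nra. }
      assert (P3 : Rint (fun x => exp (- t1 * x) * W x) x0 T = F T - F x0).
      { unfold F. rewrite (Rint_chasles _ 0 x0 T); try (apply ex_expW; auto; lra). ring. }
      assert (P4 : F T - F x0 <= Rabs L1 + 1 + Rabs (F x0)).
      { specialize (HM1 T ltac:(lra)). fold L1 in HM1. apply Rabs_def2 in HM1.
        pose proof (Rle_abs L1). pose proof (Rle_abs (- F x0)). rewrite Rabs_Ropp in *. unfold F in *. lra. }
      assert (P5 : exp (- (t - t1) * x0) <= exp (- t * e) * exp (t1 * e)).
      { rewrite <- exp_plus. replace (- t * e + t1 * e) with (- (t - t1) * e) by ring.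
        apply exp_mono_neg; lra. }
      rewrite P3 in P2.
      assert (0 <= Rabs L1 + 1 + Rabs (F x0)) by (pose proof (Rabs_pos L1); pose proof (Rabs_pos (F x0)); lra).
      pose proof (exp_pos (- (t - t1) * x0)). pose proof (exp_pos (- t * e)). pose proof (exp_pos (t1 * e)).
      assert (exp (- (t - t1) * x0) * (F T - F x0) <= exp (- (t - t1) * x0) * (Rabs L1 + 1 + Rabs (F x0))) by nra.
      assert (exp (- (t - t1) * x0) * (Rabs L1 + 1 + Rabs (F x0)) <= exp (- t * e) * exp (t1 * e) * (Rabs L1 + 1 + Rabs (F x0))) by nra.
      assert (exp (- t * e) * B * (x0 - e / 2) <= exp (- t * e) * B * x0).
      { assert (0 <= exp (- t * e) * B) by nra. nra. }
      unfold K. nra. }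
  destruct Htail as [K [HK [T1 [HT1 Htail]]]].
  set (s := c * e / (4 * (K + 1))).
  assert (Hs : 0 < s) by (unfold s; apply Rdiv_lt_0_compat; nra).
  set (T2 := 2 / e * (- ln s)).
  destruct (Hgrow (Rmax t1 T2)) as [t [Ht Hpt]].
  pose proof (Rmax_l t1 T2). pose proof (Rmax_r t1 T2).
  set (u := exp (- t * (e / 2))).
  assert (Hu : 0 < u) by apply exp_pos.
  assert (Hus : u <= s).
  { unfold u. replace s with (exp (- T2 * (e/2))).
    apply exp_le'; nra. unfold T2. replace (- (2 / e * - ln s) * (e / 2)) with (ln s) by (field; lra).
    apply exp_ln; auto. }
  assert (HuK : u * K <= c * e / 4).
  { apply Rle_trans with (s * K). nra. unfold s.
    replace (c * e / (4 * (K + 1)) * K) with (c * e / 4 * (K / (K + 1))) by (field; lra).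
    assert (K / (K+1) <= 1). { apply Rmult_le_reg_r with (K+1). lra. unfold Rdiv. rewrite Rmult_assoc, Rinv_l; lra. }
    assert (0 < c * e / 4) by nra. nra. }
  assert (Hexp2 : exp (- t * e) = u * u).
  { unfold u. rewrite <- exp_plus. f_equal. field. }
  set (L := / (psi t - q)).
  assert (HLp : 0 < L) by (unfold L; apply Rinv_0_lt_compat; lra).
  destruct (HL t ltac:(lra) L HLp) as [M HM].
  set (T := Rmax (M + 1) T1).
  pose proof (Rmax_l (M + 1) T1). pose proof (Rmax_r (M + 1) T1).
  specialize (HM T ltac:(unfold T; lra)). fold L in HM.
  rewrite (Rint_chasles _ 0 (e/2) T) in HM; try (apply ex_expW; auto; unfold T; lra).
  assert (Hhead : Rint (fun x => exp (- t * x) * W x) 0 (e / 2) <= (- c * u) * (e/2 - 0)).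
  { apply Rint_ub_ex. lra. apply ex_expW; auto; lra.
    intros x Hx. pose proof (exp_mono_neg t x (e/2) ltac:(lra) ltac:(lra)) as E1. fold u in E1.
    pose proof (Hinc' x e ltac:(lra) ltac:(lra)) as E2. assert (E3 : W x <= - c) by (unfold c; lra).
    pose proof (exp_pos (- t * x)) as E4.
    assert (E5 : exp (- t * x) * W x <= exp (- t * x) * (- c)) by nra. nra. }
  specialize (Htail t ltac:(lra) T ltac:(unfold T; lra)).
  rewrite Hexp2 in Htail.
  apply Rabs_def2 in HM.
  assert (u * u * K <= u * (c * e / 4)) by nra.
  nra.
Qed.


Definition goodW (W : R -> R) := relcont W /\ (forall x, 0 <= x -> 0 <= W x) /\
  (forall x y, 0 <= x -> x <= y -> W x <= W y) /\ (forall x y, 0 <= x -> x < y -> W x < W y).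

Lemma goodW_of psi q W : is_scale_function psi q W -> 0 <= W 0 -> goodW W.
Proof.
  intros [_ [Hc [Hinc _]]] H0.
  assert (Hinc' : forall x y, 0 <= x -> x <= y -> W x <= W y).
  { intros x y Hx Hxy. destruct (Req_dec x y). subst; lra. apply Rlt_le, Hinc; lra. }
  refine (conj Hc (conj _ (conj Hinc' Hinc))).
  intros x Hx. apply Rle_trans with (W 0); auto. apply Hinc'; lra.
Qed.

Definition CZ q (W : R -> R) N := 1 + q * W N * N.


Lemma Z_ge1 (q : R) (W : R -> R) (Hq : 0 < q) (HW : goodW W) y : 0 <= y -> 1 <= Zq q W y.
Proof.
  destruct HW as [_ [Hn _]]. intros Hy. unfold Zq.
  pose proof (Rint_nonneg W 0 y Hy (fun x Hx => Hn x (proj1 Hx))). nra.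
Qed.

Lemma Z_le (q : R) (W : R -> R) (Hq : 0 < q) (HW : goodW W) y N : 0 <= y <= N -> Zq q W y <= CZ q W N.
Proof.
  destruct HW as [_ [Hn [Hi _]]]. intros Hy. unfold Zq, CZ.
  assert (Rint W 0 y <= W N * (y - 0)).
  { apply Rint_ub. lra. apply Hn; lra. intros x Hx. apply Hi; lra. }
  assert (0 <= W N) by (apply Hn; lra).
  assert (W N * y <= W N * N) by nra. nra.
Qed.

Lemma Z_relcont (q : R) (W : R -> R) (Hq : 0 < q) (HW : goodW W) : relcont (Zq q W).
Proof.
  destruct HW as [Hc [Hn [Hi _]]].
  intros x Hx eps Heps.
  set (B := W (x + 1)).
  assert (HB : 0 <= B) by (apply Hn; lra).
  exists (Rmin 1 (eps / (q * B + 1))). split.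
  { apply Rmin_pos. lra. apply Rdiv_lt_0_compat; nra. }
  intros y [Hy Hd]. simpl in *. unfold R_dist in *.
  pose proof (Rmin_l 1 (eps / (q * B + 1))) as Hm1. pose proof (Rmin_r 1 (eps / (q * B + 1))) as Hm2.
  assert (Hyx : Rabs (y - x) * (q * B + 1) < eps).
  { apply Rlt_le_trans with ((eps / (q * B + 1)) * (q * B + 1)).
    apply Rmult_lt_compat_r. nra. lra. right; field; nra. }
  unfold Zq.
  destruct (Rle_dec x y).
  - rewrite (Rint_chasles W 0 x y) by (apply relcont_ex; auto; lra).
    rewrite Rabs_pos_eq in Hd, Hyx by lra.
    assert (Rint W x y <= B * (y - x)).
    { apply Rint_ub. lra. auto. intros z Hz. apply Hi; lra. }
    assert (0 <= Rint W x y) by (apply Rint_nonneg; [lra| intros; apply Hn; lra]).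
    rewrite Rabs_pos_eq by nra. nra.
  - rewrite (Rint_chasles W 0 y x) by (apply relcont_ex; auto; lra).
    rewrite Rabs_left1 in Hd, Hyx by lra.
    assert (Rint W y x <= B * (x - y)).
    { apply Rint_ub. lra. auto. intros z Hz. apply Hi; lra. }
    assert (0 <= Rint W y x) by (apply Rint_nonneg; [lra| intros; apply Hn; lra]).
    rewrite Rabs_left1 by nra. nra.
Qed.

Lemma Zbar_diff (q : R) (W : R -> R) (Hq : 0 < q) (HW : goodW W) u v : 0 <= u <= v -> v - u <= Zbarq q W v - Zbarq q W u.
Proof.
  intros Huv. unfold Zbarq.
  rewrite (Rint_chasles _ 0 u v) by (apply relcont_ex; [apply Z_relcont; auto|lra|lra]).
  assert (1 * (v - u) <= Rint (Zq q W) u v).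
  { apply Rint_lb_ex. lra. apply relcont_ex; [apply Z_relcont; auto|lra|lra].
    intros; apply Z_ge1; auto; lra. }
  lra.
Qed.

Lemma Zbar_ub (q : R) (W : R -> R) (Hq : 0 < q) (HW : goodW W) b N : 0 <= b <= N -> Zbarq q W b <= CZ q W N * N.
Proof.
  intros Hb. unfold Zbarq.
  assert (1 <= CZ q W N) by (pose proof (Z_ge1 q W Hq HW N ltac:(lra)); pose proof (Z_le q W Hq HW N N ltac:(lra)); lra).
  apply Rle_trans with (CZ q W N * (b - 0)).
  apply Rint_ub. lra. lra. intros; apply Z_le; auto; lra. nra.
Qed.


Lemma I_nonneg WW a : goodW WW -> 0 <= a -> 0 <= Rint WW 0 a.
Proof. intros [_ [Hn _]] Ha. apply Rint_nonneg; auto. intros; apply Hn; lra. Qed.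

Lemma I_lb WW h a : goodW WW -> 0 < h <= a -> 0 < (h/2) * WW (h/2) /\ (h/2) * WW (h/2) <= Rint WW 0 a.
Proof.
  intros G Hh. pose proof G as [Hc [Hn [Hi Hs]]].
  assert (0 < WW (h/2)). { pose proof (Hs 0 (h/2) ltac:(lra) ltac:(lra)). pose proof (Hn 0 ltac:(lra)). lra. }
  split. nra.
  rewrite (Rint_chasles _ 0 (h/2) a) by (apply relcont_ex; auto; lra).
  pose proof (I_nonneg WW (h/2) G ltac:(lra)).
  assert (WW (h/2) * (a - h/2) <= Rint WW (h/2) a).
  { apply Rint_lb_ex. lra. apply relcont_ex; auto; lra. intros; apply Hi; lra. }
  nra.
Qed.

Lemma J_ub q W WW a b N : 0 < q -> goodW W -> goodW WW -> 0 <= a <= b -> b <= N ->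
  Rint (fun y => WW (b - y) * Zq q W y) (b - a) b <= (WW a * CZ q W N) * a.
Proof.
  intros Hq GW GWW Hab HbN. pose proof GWW as [_ [Hn [Hi _]]].
  replace a with (b - (b - a)) at 3 by ring.
  apply Rint_ub. lra.
  { pose proof (Hn a ltac:(lra)). pose proof (Z_ge1 q W Hq GW N ltac:(lra)).
    pose proof (Z_le q W Hq GW N N ltac:(lra)). nra. }
  intros y Hy. pose proof (Hn (b - y) ltac:(lra)). pose proof (Hi (b - y) a ltac:(lra) ltac:(lra)).
  pose proof (Z_ge1 q W Hq GW y ltac:(lra)). pose proof (Z_le q W Hq GW y N ltac:(lra)).
  nra.
Qed.


Lemma Gamma_eq q delta rho beta W WW dX a b :
  Gamma q delta rho beta W WW dX a b =
  delta * (1 + q * Rint WW 0 a) - q * rho - q * beta *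
   (Zbarq q W b + dX / q + delta * Rint (fun y => WW (b - y) * Zq q W y) (b - a) b).
Proof. reflexivity. Qed.

Lemma G00 q delta rho beta W WW dX : 0 < q ->
  Gamma q delta rho beta W WW dX 0 0 = delta - q * rho - beta * dX.
Proof.
  intros Hq. rewrite Gamma_eq. unfold Zbarq. replace (0 - 0) with 0 by ring.
  rewrite !Rint_point. field. lra.
Qed.

Lemma G0b q delta rho beta W WW dX b :
  Gamma q delta rho beta W WW dX 0 b = delta - q * rho - q * beta * (Zbarq q W b + dX / q).
Proof.
  rewrite Gamma_eq. replace (b - 0) with b by ring. rewrite !Rint_point. ring.
Qed.

Lemma sel_pos G a b : selected_pair G a b -> 0 < G 0 0 ->
  0 < b /\ min_is_zero G b /\ 0 <= a <= b /\ G a b = 0.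
Proof.
  intros [[H _]|[_ [Hb [Hmz [_ [Ha [Hmin _]]]]]]] Hp. lra.
  split; auto. split; auto. split; auto.
  destruct Hmz as [[a0 [Ha0 Hz]] Hge]. pose proof (Hmin a0 Ha0). pose proof (Hge a Ha). lra.
Qed.

Lemma sel_npos G a b : selected_pair G a b -> G 0 0 <= 0 -> a = 0 /\ b = 0.
Proof. intros [[_ [H1 H2]]|[H _]] Hp; [auto|lra]. Qed.


Lemma part1b q delta rho W WW dX : 0 < q -> 0 < delta -> goodW W -> goodW WW -> q * rho < delta ->
  forall M, exists beta0, 0 < beta0 /\ forall beta, 0 < beta < beta0 -> beta < 1 ->
    forall a b, selected_pair (Gamma q delta rho beta W WW dX) a b -> M < b.
Proof.
  intros Hq Hd GW GWW Hr M.
  pose proof GWW as [_ [Hn [Hi _]]].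
  set (N := Rmax M 0).
  pose proof (Rmax_l M 0) as HN1. pose proof (Rmax_r M 0) as HN2. fold N in HN1, HN2.
  set (Rb := CZ q W N * N + Rabs dX / q + delta * (WW N * CZ q W N * N)).
  set (g := delta - q * rho).
  assert (Hg : 0 < g) by (unfold g; lra).
  pose proof (Rabs_pos dX) as HdX. pose proof (Rabs_pos Rb) as HR.
  exists (Rmin (g / (Rabs dX + 1)) (g / (q * Rabs Rb + 1))).
  split. apply Rmin_pos; apply Rdiv_lt_0_compat; nra.
  intros beta [Hb0 Hb1] _ a b Hsel.
  pose proof (Rmin_l (g / (Rabs dX + 1)) (g / (q * Rabs Rb + 1))) as Hm1.
  pose proof (Rmin_r (g / (Rabs dX + 1)) (g / (q * Rabs Rb + 1))) as Hm2.
  assert (E1 : beta * (Rabs dX + 1) < g).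
  { apply Rlt_le_trans with (g / (Rabs dX + 1) * (Rabs dX + 1)). apply Rmult_lt_compat_r; lra.
    right; field; lra. }
  assert (E2 : beta * (q * Rabs Rb + 1) < g).
  { apply Rlt_le_trans with (g / (q * Rabs Rb + 1) * (q * Rabs Rb + 1)). apply Rmult_lt_compat_r; nra.
    right; field; nra. }
  assert (HG0 : 0 < Gamma q delta rho beta W WW dX 0 0).
  { rewrite G00 by auto. pose proof (Rle_abs dX) as HH.
    assert (beta * dX <= beta * Rabs dX) by (apply Rmult_le_compat_l; lra). unfold g in *. nra. }
  destruct (sel_pos _ _ _ Hsel HG0) as [Hb [[[a0 [Ha0 Hz]] _] _]].
  apply Rnot_le_lt. intro HbM.
  rewrite Gamma_eq in Hz.
  pose proof (I_nonneg WW a0 GWW (proj1 Ha0)) as HI.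
  pose proof (Zbar_ub q W Hq GW b N ltac:(lra)) as HZ.
  pose proof (J_ub q W WW a0 b N Hq GW GWW Ha0 ltac:(lra)) as HJ.
  set (J := Rint (fun y => WW (b - y) * Zq q W y) (b - a0) b) in *.
  assert (HCZ : 1 <= CZ q W N).
  { pose proof (Z_ge1 q W Hq GW N ltac:(lra)). pose proof (Z_le q W Hq GW N N ltac:(lra)). lra. }
  assert (HWa : WW a0 <= WW N) by (apply Hi; lra).
  assert (HWa0 : 0 <= WW a0) by (apply Hn; lra).
  assert (HJ2 : WW a0 * CZ q W N * a0 <= WW N * CZ q W N * N).
  { assert (WW a0 * CZ q W N <= WW N * CZ q W N) by nra.
    assert (0 <= WW a0 * CZ q W N) by nra. nra. }
  assert (HdXq : dX / q <= Rabs dX / q).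
  { unfold Rdiv. apply Rmult_le_compat_r. left; apply Rinv_0_lt_compat; lra. apply Rle_abs. }
  assert (HX : Zbarq q W b + dX / q + delta * J <= Rabs Rb).
  { apply Rle_trans with Rb; [|apply Rle_abs]. unfold Rb. nra. }
  assert (q * beta * (Zbarq q W b + dX / q + delta * J) <= q * beta * Rabs Rb).
  { apply Rmult_le_compat_l. nra. auto. }
  assert (0 <= delta * (q * Rint WW 0 a0)) by (apply Rmult_le_pos; [lra|apply Rmult_le_pos; lra]).
  unfold g in E2. nra.
Qed.


Lemma part3b q delta rho W WW dX : 0 < q -> 0 < delta -> goodW W -> goodW WW -> q * rho = delta -> dX < 0 ->
  forall bl, 0 <= bl -> Zbarq q W bl = - dX / q ->
  forall eps, 0 < eps -> exists beta0, 0 < beta0 /\ forall beta, 0 < beta < beta0 -> beta < 1 ->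
    forall a b, selected_pair (Gamma q delta rho beta W WW dX) a b -> Rabs (b - bl) < eps /\ Rabs a < eps.
Proof.
  intros Hq Hd GW GWW Hr HdX bl Hbl Hzb eps Heps.
  pose proof GWW as [_ [Hn [Hi _]]].
  set (C := CZ q W bl).
  assert (HC : 1 <= C).
  { pose proof (Z_ge1 q W Hq GW bl Hbl). pose proof (Z_le q W Hq GW bl bl ltac:(lra)). unfold C; lra. }
  set (X := delta * WW 1 * C).
  assert (HX : 0 <= X). { unfold X. pose proof (Hn 1 ltac:(lra)). apply Rmult_le_pos; [apply Rmult_le_pos|]; lra. }
  set (eta := Rmin 1 (eps / (2 * (X + 1)))).
  pose proof (Rmin_l 1 (eps / (2 * (X + 1)))) as He1. pose proof (Rmin_r 1 (eps / (2 * (X + 1)))) as He2.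
  fold eta in He1, He2.
  assert (Heta : 0 < eta) by (unfold eta; apply Rmin_pos; [lra| apply Rdiv_lt_0_compat; lra]).
  assert (HXeta : X * eta <= eps / 2).
  { apply Rle_trans with ((X + 1) * eta). nra.
    apply Rle_trans with ((X + 1) * (eps / (2 * (X + 1)))). apply Rmult_le_compat_l; lra.
    right; field; lra. }
  set (P := bl * WW bl * C + 1).
  assert (HP : 1 <= P). { unfold P. pose proof (Hn bl Hbl). assert (0 <= bl * WW bl) by nra. nra. }
  destruct (I_lb WW eta eta GWW ltac:(lra)) as [Ieta _].
  destruct (I_lb WW eps eps GWW ltac:(lra)) as [Ieps _].
  set (ie := eta / 2 * WW (eta / 2)) in *. set (ip := eps / 2 * WW (eps / 2)) in *.
  exists (Rmin (ie / P) (ip / P)). split. apply Rmin_pos; apply Rdiv_lt_0_compat; lra.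
  intros beta [Hb0 Hb1] _ a b Hsel.
  pose proof (Rmin_l (ie / P) (ip / P)) as Hm1. pose proof (Rmin_r (ie / P) (ip / P)) as Hm2.
  assert (Bie : beta * P < ie).
  { apply Rlt_le_trans with (ie / P * P). apply Rmult_lt_compat_r; lra. right; field; lra. }
  assert (Bip : beta * P < ip).
  { apply Rlt_le_trans with (ip / P * P). apply Rmult_lt_compat_r; lra. right; field; lra. }
  assert (HG0 : 0 < Gamma q delta rho beta W WW dX 0 0).
  { rewrite G00 by auto. nra. }
  destruct (sel_pos _ _ _ Hsel HG0) as [Hb [[_ Hge] [Ha Hz]]].
  assert (Hbbl : b <= bl).
  { apply Rnot_lt_le. intro Hlt. pose proof (Hge 0 ltac:(lra)) as H0.
    rewrite G0b in H0. pose proof (Zbar_diff q W Hq GW bl b ltac:(lra)).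
    replace (dX / q) with (- Zbarq q W bl) in H0 by (rewrite Hzb; field; lra).
    assert (0 < q * beta * (Zbarq q W b + - Zbarq q W bl)).
    { apply Rmult_lt_0_compat. nra. lra. }
    lra. }
  rewrite Gamma_eq in Hz.
  replace (dX / q) with (- Zbarq q W bl) in Hz by (rewrite Hzb; field; lra).
  pose proof (J_ub q W WW a b bl Hq GW GWW Ha Hbbl) as HJ. fold C in HJ.
  set (J := Rint (fun y => WW (b - y) * Zq q W y) (b - a) b) in *.
  set (I := Rint WW 0 a) in *.
  set (Dz := Zbarq q W bl - Zbarq q W b).
  assert (HDz : bl - b <= Dz) by (unfold Dz; apply Zbar_diff; auto; lra).
  assert (Hmain : delta * q * I + q * beta * Dz = q * beta * delta * J).
  { unfold Dz. rewrite <- Hr in Hz |- *. nra. }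
  assert (HI0 : 0 <= I) by (apply I_nonneg; auto; lra).
  assert (HWa : 0 <= WW a) by (apply Hn; lra).
  assert (HWab : WW a * a <= WW bl * bl).
  { pose proof (Hi a bl ltac:(lra) ltac:(lra)). nra. }
  assert (HJ2 : J <= P - 1).
  { apply Rle_trans with (WW a * C * a). auto. unfold P.
    assert (WW a * a * C <= WW bl * bl * C) by nra. nra. }
  assert (Hqb : 0 < q * beta) by nra.
  assert (Hlarge : forall h, 0 < h -> h <= a -> h / 2 * WW (h / 2) > beta * P -> False).
  { intros h Hh Hha Hhb. destruct (I_lb WW h a GWW ltac:(lra)) as [_ Hl].
    assert (beta * delta * J <= beta * delta * (P - 1)).
    { apply Rmult_le_compat_l. nra. auto. }
    assert (0 <= Dz) by lra.
    assert (q * beta * Dz >= 0) by nra.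
    assert (delta * q * I >= delta * q * (h / 2 * WW (h / 2))).
    { apply Rle_ge. apply Rmult_le_compat_l. nra. auto. }
    assert (delta * q * (h / 2 * WW (h / 2)) > delta * q * (beta * P)).
    { apply Rmult_gt_compat_l. nra. auto. }
    assert (q * beta * delta * J <= q * (beta * delta * (P - 1))) by nra.
    nra. }
  split.
  - rewrite Rabs_left1 by lra.
    apply Rnot_le_lt. intro Hbe.
    assert (HDe : eps <= Dz) by lra.
    destruct (Rle_dec a eta) as [Hae|Hae].
    + assert (WW a * a <= WW 1 * eta).
      { pose proof (Hi a 1 ltac:(lra) ltac:(lra)). pose proof (Hn 1 ltac:(lra)). nra. }
      assert (delta * J <= eps / 2).
      { apply Rle_trans with (X * eta); auto. unfold X.
        assert (J <= WW 1 * eta * C).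
        { apply Rle_trans with (WW a * C * a). auto. nra. }
        nra. }
      assert (q * beta * (delta * J) <= q * beta * (eps / 2)) by (apply Rmult_le_compat_l; lra).
      assert (q * beta * eps <= q * beta * Dz) by (apply Rmult_le_compat_l; lra).
      assert (0 <= delta * q * I) by (apply Rmult_le_pos; nra).
      nra.
    + apply (Hlarge eta Heta ltac:(lra)). fold ie. lra.
  - rewrite Rabs_pos_eq by lra.
    apply Rnot_le_lt. intro Hae.
    apply (Hlarge eps Heps Hae). fold ip. lra.
Qed.


Theorem mainTheorem10
  (psiY : R -> R) (m q delta rho : R) (WW W : R -> R)
  (HY : spec_pos_laplace_exponent psiY m)
  (Hq : 0 < q) (Hdelta : 0 < delta)
  (HWW : is_scale_function psiY q WW)
  (HW : is_scale_function (fun t => psiY t + delta * t) q W) :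
  let dX := m + delta in
  let sel := fun beta a b => selected_pair (Gamma q delta rho beta W WW dX) a b in
  (q * rho / delta < 1 ->
     (exists beta0, 0 < beta0 /\ forall beta, 0 < beta < beta0 -> beta < 1 ->
        forall a b, sel beta a b -> 0 < b) /\
     (forall M, exists beta0, 0 < beta0 /\ forall beta, 0 < beta < beta0 -> beta < 1 ->
        forall a b, sel beta a b -> M < b)) /\
  (q * rho / delta > 1 ->
     exists beta0, 0 < beta0 /\ forall beta, 0 < beta < beta0 -> beta < 1 ->
        forall a b, sel beta a b -> a = 0 /\ b = 0) /\
  (q * rho / delta = 1 -> dX < 0 ->
     (forall beta, 0 < beta < 1 -> forall a b, sel beta a b -> 0 < b) /\
     (forall bl, 0 <= bl -> Zbarq q W bl = - dX / q ->
        forall eps, 0 < eps -> exists beta0, 0 < beta0 /\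
          forall beta, 0 < beta < beta0 -> beta < 1 ->
          forall a b, sel beta a b -> Rabs (b - bl) < eps /\ Rabs a < eps)) /\
  (q * rho / delta = 1 -> 0 <= dX ->
     forall beta, 0 < beta < 1 -> forall a b, sel beta a b -> a = 0 /\ b = 0).
Proof.
  cbv zeta.
  set (dX := m + delta).
  assert (GWW : goodW WW).
  { apply (goodW_of psiY q WW HWW). apply (scale_nonneg psiY q WW HWW).
    intros T0. destruct (psi_grow psiY m HY T0 q) as [t [Ht Hp]]. exists t; auto. }
  assert (GW : goodW W).
  { apply (goodW_of _ q W HW). apply (scale_nonneg _ q W HW).
    intros T0. destruct (psi_grow psiY m HY (Rmax T0 0) q) as [t [Ht Hp]]. exists t.
    pose proof (Rmax_l T0 0). pose proof (Rmax_r T0 0). split. lra. nra. }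
  assert (Hrel : q * rho = (q * rho / delta) * delta) by (field; lra).
  pose proof (Rle_abs dX) as HdXa. pose proof (Rabs_pos dX) as HdXp.
  split; [|split; [|split]].
  - intros H1. assert (Hr : q * rho < delta) by nra. split.
    + exists ((delta - q * rho) / (Rabs dX + 1)). split. apply Rdiv_lt_0_compat; lra.
      intros beta [Hb0 Hb1] _ a b Hs.
      assert (E : beta * (Rabs dX + 1) < delta - q * rho).
      { apply Rlt_le_trans with ((delta - q * rho) / (Rabs dX + 1) * (Rabs dX + 1)).
        apply Rmult_lt_compat_r; lra. right; field; lra. }
      assert (beta * dX <= beta * Rabs dX) by (apply Rmult_le_compat_l; lra).
      refine (proj1 (sel_pos _ _ _ Hs _)). rewrite G00 by auto. nra.
    + apply part1b; auto.
  - intros H2. assert (Hr : delta < q * rho) by nra.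
    exists ((q * rho - delta) / (Rabs dX + 1)). split. apply Rdiv_lt_0_compat; lra.
    intros beta [Hb0 Hb1] _ a b Hs.
    assert (E : beta * (Rabs dX + 1) < q * rho - delta).
    { apply Rlt_le_trans with ((q * rho - delta) / (Rabs dX + 1) * (Rabs dX + 1)).
      apply Rmult_lt_compat_r; lra. right; field; lra. }
    pose proof (Rle_abs (- dX)) as HH. rewrite Rabs_Ropp in HH.
    assert (beta * - dX <= beta * Rabs dX) by (apply Rmult_le_compat_l; lra).
    apply (sel_npos _ _ _ Hs). rewrite G00 by auto. nra.
  - intros H3 HdX. assert (Hr : q * rho = delta) by (rewrite Hrel, H3; ring). split.
    + intros beta [Hb0 Hb1] a b Hs. refine (proj1 (sel_pos _ _ _ Hs _)).
      rewrite G00 by auto. nra.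
    + intros bl Hbl Hz eps Heps. apply part3b; auto.
  - intros H3 HdX beta [Hb0 Hb1] a b Hs. assert (Hr : q * rho = delta) by (rewrite Hrel, H3; ring).
    apply (sel_npos _ _ _ Hs). rewrite G00 by auto. nra.
Qed.
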